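(* Let $\mathcal{A}$ be a unital commutative C*-algebra with identity $1$, let $d\in\mathbb{N}$, and let $\mathcal{A}^d$ be the standard Hilbert C*-module over $\mathcal{A}$. Let $n\geq d$ and let $\{\tau_j\}_{j=1}^n$ be a collection of vectors in $\mathcal{A}^d$ with $\langle \tau_j,\tau_j\rangle=1$ for all $1\leq j\leq n$. Then, for every $m\in\mathbb{N}$, \[ \sum_{j=1}^n\sum_{k=1}^n\|\langle \tau_j, \tau_k\rangle \|^{2m}\geq \sum_{j=1}^n\sum_{k=1}^n\langle \tau_j, \tau_k\rangle ^{m}\langle \tau_k, \tau_j\rangle ^{m}\geq \frac{n^2}{{d+m-1\choose m}}, \] in particular \[ \sum_{j=1}^n\sum_{k=1}^n\|\langle \tau_j, \tau_k\rangle \|^{2} \geq \sum_{j=1}^n\sum_{k=1}^n\langle \tau_j, \tau_k\rangle \langle \tau_k, \tau_j\rangle \geq \frac{n^2}{d}. \] Further (for $n\geq 2$), for every $m\in\mathbb{N}$, \[ \max _{1\leq j,k \leq n,\, j\neq k}\|\langle \tau_j, \tau_k\rangle \|^{2m}\geq \frac{1}{n-1}\left[\frac{n}{{d+m-1\choose m}}-1\right], \] and in particular \[ \max _{1\leq j,k \leq n,\, j\neq k}\|\langle \tau_j, \tau_k\rangle \|^{2}\geq\frac{n-d}{d(n-1)}. \]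
   Context: The standard Hilbert C*-module $\mathcal{A}^d$ consists of $d$-tuples $(a_1,\dots,a_d)$ of elements of $\mathcal{A}$, with left action $a\cdot(a_1,\dots,a_d)=(aa_1,\dots,aa_d)$ and $\mathcal{A}$-valued inner product $\langle (a_r)_{r=1}^d,(b_r)_{r=1}^d\rangle=\sum_{r=1}^d a_rb_r^*$ (linear in the first variable, conjugate-linear in the second). Inequalities between elements of $\mathcal{A}$ refer to the usual order on self-adjoint elements of the C*-algebra, and a real number $c$ appearing in such an inequality is identified with $c\cdot 1\in\mathcal{A}$; $\|\cdot\|$ is the C*-norm of $\mathcal{A}$. *)

(* Defs.v *)
From HB Require Import structures.
From mathcomp Require Import all_boot all_order all_algebra.
From mathcomp Require Import complex.
From mathcomp Require Import reals.
Set Implicit Arguments. Unset Strict Implicit. Unset Printing Implicit Defensive.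
Import Order.TTheory GRing.Theory Num.Theory.
Local Open Scope ring_scope.

Record ucCstarAlg (R : realType) := UcCstarAlg {
  cs_car :> comAlgType R[i];
  cs_star : cs_car -> cs_car;
  cs_norm : cs_car -> R;
  cs_starD : forall a b, cs_star (a + b) = cs_star a + cs_star b;
  cs_starZ : forall (c : R[i]) a, cs_star (c *: a) = (c^*)%C *: cs_star a;
  cs_starM : forall a b, cs_star (a * b) = cs_star b * cs_star a;
  cs_starK : forall a, cs_star (cs_star a) = a;
  cs_norm_ge0 : forall a, 0 <= cs_norm a;
  cs_norm_eq0 : forall a, cs_norm a = 0 -> a = 0;
  cs_normD : forall a b, cs_norm (a + b) <= cs_norm a + cs_norm b;
  cs_normZ : forall (c : R[i]) a, cs_norm (c *: a) = ComplexField.Normc.normc c * cs_norm a;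
  cs_normM : forall a b, cs_norm (a * b) <= cs_norm a * cs_norm b;
  cs_cstar : forall a, cs_norm (cs_star a * a) = cs_norm a ^+ 2;
  cs_complete : forall u : nat -> cs_car,
    (forall e : R, 0 < e -> exists N, forall p q, (N <= p)%N -> (N <= q)%N ->
        cs_norm (u p - u q) < e) ->
    exists l, forall e : R, 0 < e -> exists N, forall p, (N <= p)%N ->
        cs_norm (u p - l) < e
}.

Section Cstar.
Variables (R : realType) (A : ucCstarAlg R).

Definition cs_spectrum (a : A) (lam : R[i]) : Prop :=
  ~ exists b : A, (a - lam%:A) * b = 1.

(* positive elements: self-adjoint with spectrum in [0, +oo)
   (on R[i], 0 <= lam means lam is real and nonnegative) *)
Definition cs_pos (a : A) : Prop :=
  cs_star a = a /\ forall lam : R[i], cs_spectrum a lam -> 0 <= lam.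

Definition cs_le (a b : A) : Prop := cs_pos (b - a).

Definition cs_real (c : R) : A := (c%:C)%C%:A.

Definition cs_ip (d : nat) (x y : 'I_d -> A) : A :=
  \sum_(r < d) x r * cs_star (y r).

End Cstar.

(* Main.v *)
Require Import Defs.
From HB Require Import structures.
From mathcomp Require Import all_boot all_order all_algebra.
From mathcomp Require Import complex.
From mathcomp Require Import reals.
From mathcomp Require Import lra ring.
Import Order.TTheory GRing.Theory Num.Theory.
Local Open Scope ring_scope.

Set Implicit Arguments. Unset Strict Implicit. Unset Printing Implicit Defensive.

Section Basics.
Variables (R : realType) (A : ucCstarAlg R).
Local Notation st := (@cs_star R A).
Local Notation nm := (@cs_norm R A).
Local Notation rc := (cs_real A).
Implicit Types a b x y z : A.

Lemma stK a : st (st a) = a. Proof. exact: cs_starK. Qed.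
Lemma stD a b : st (a + b) = st a + st b. Proof. exact: cs_starD. Qed.
Lemma stMr a b : st (a * b) = st b * st a. Proof. exact: cs_starM. Qed.
Lemma stZ (c : R[i]) a : st (c *: a) = (c^*)%C *: st a. Proof. exact: cs_starZ. Qed.
Lemma nm_cstar a : nm (st a * a) = nm a ^+ 2. Proof. exact: cs_cstar. Qed.

Lemma st0 : st 0 = 0.
Proof. by apply: (addrI (st 0)); rewrite -stD !addr0. Qed.

Lemma stN a : st (- a) = - st a.
Proof. by apply: (addrI (st a)); rewrite -stD !subrr st0. Qed.

Lemma stB a b : st (a - b) = st a - st b.
Proof. by rewrite stD stN. Qed.

Lemma st_sum (I : Type) (r : seq I) (P : pred I) (F : I -> A) :
  st (\sum_(i <- r | P i) F i) = \sum_(i <- r | P i) st (F i).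
Proof.
elim/big_rec2: _ => [|i y1 y2 _ <-]; first exact: st0.
by rewrite stD.
Qed.

Lemma st1 : st 1 = 1.
Proof.
have h : st (st 1) = st (st 1 * 1) by rewrite mulr1.
by move: h; rewrite stMr !stK mulr1 => h; symmetry.
Qed.
Lemma stM a b : st (a * b) = st a * st b.
Proof. by rewrite stMr mulrC. Qed.

Lemma stX a n : st (a ^+ n) = st a ^+ n.
Proof.
elim: n => [|n IH]; first by rewrite !expr0 st1.
by rewrite !exprS stM IH.
Qed.

Lemma st_alg (c : R[i]) : st (c%:A) = (c^*)%C%:A.
Proof. by rewrite stZ st1. Qed.

Lemma st_rc r : st (rc r) = rc r.
Proof. by rewrite /cs_real st_alg conjc_real. Qed.

Lemma rcD r s : rc (r + s) = rc r + rc s.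
Proof. by rewrite /cs_real rmorphD /= scalerDl. Qed.

Lemma rcN r : rc (- r) = - rc r.
Proof. by rewrite /cs_real rmorphN /= scaleNr. Qed.

Lemma rcB r s : rc (r - s) = rc r - rc s.
Proof. by rewrite rcD rcN. Qed.

Lemma rcM r s : rc (r * s) = rc r * rc s.
Proof. by rewrite /cs_real rmorphM /= mulr_algl scalerA. Qed.

Lemma rc0 : rc 0 = 0.
Proof. by rewrite /cs_real scale0r. Qed.

Lemma rc1 : rc 1 = 1.
Proof. by rewrite /cs_real scale1r. Qed.

Lemma rc_sum (I : Type) (r : seq I) (P : pred I) (F : I -> R) :
  rc (\sum_(i <- r | P i) F i) = \sum_(i <- r | P i) rc (F i).
Proof.
elim/big_rec2: _ => [|i y1 y2 _ <-]; first exact: rc0.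
by rewrite rcD.
Qed.

Lemma rcn n : rc n%:R = n%:R.
Proof.
elim: n => [|n IH]; first by rewrite rc0.
by rewrite -[in LHS]natr1 rcD IH rc1 natr1.
Qed.

Lemma nm0 : nm 0 = 0.
Proof.
have := @cs_normZ R A 0 0; rewrite scale0r Normc.normc0 mul0r; exact.
Qed.

Lemma nmZ (c : R[i]) a : nm (c *: a) = Normc.normc c * nm a.
Proof. exact: cs_normZ. Qed.

Lemma normc_real (r : R) : Normc.normc (r%:C)%C = `|r|.
Proof. by rewrite /Normc.normc /= expr0n /= addr0 sqrtr_sqr. Qed.

Lemma nmN a : nm (- a) = nm a.
Proof.
rewrite -scaleN1r nmZ.
have -> : (-1 : R[i]) = ((-1 : R)%:C)%C by rewrite rmorphN rmorph1.
by rewrite normc_real normrN normr1 mul1r.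
Qed.

Lemma nm_ge0 a : 0 <= nm a. Proof. exact: cs_norm_ge0. Qed.

Lemma nmD a b : nm (a + b) <= nm a + nm b. Proof. exact: cs_normD. Qed.

Lemma nmM a b : nm (a * b) <= nm a * nm b. Proof. exact: cs_normM. Qed.

Lemma nmB a b : nm (a - b) <= nm a + nm b.
Proof. by rewrite -(nmN b); apply: nmD. Qed.

Lemma nmBC a b : nm (a - b) = nm (b - a).
Proof. by rewrite -nmN opprB. Qed.

Lemma nm_eq0 a : (nm a == 0) = (a == 0).
Proof.
apply/eqP/eqP => [/cs_norm_eq0 //|->]; exact: nm0.
Qed.

Lemma nm_st a : nm (st a) = nm a.
Proof.
have H : forall b, nm b <= nm (st b).
  move=> b; have := nm_cstar b.
  have := nmM (st b) b => le1 eq1.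
  rewrite eq1 expr2 in le1.
  have [b0|bn0] := eqVneq (nm b) 0; first by rewrite b0 nm_ge0.
  have bp : 0 < nm b by rewrite lt_def bn0 nm_ge0.
  by rewrite -(ler_pM2r bp).
apply/eqP; rewrite eq_le H andbT.
by have := H (st a); rewrite stK.
Qed.

Lemma nm1 : nm 1 = 1.
Proof.
have := nm_cstar 1; rewrite st1 mulr1 expr2 => h.
have n0 : nm 1 != 0 by rewrite nm_eq0 oner_eq0.
by apply: (mulfI n0); rewrite -h mulr1.
Qed.

Lemma nm_rc r : nm (rc r) = `|r|.
Proof. by rewrite /cs_real nmZ normc_real nm1 mulr1. Qed.

Lemma nm_alg (c : R[i]) : nm (c%:A) = Normc.normc c.
Proof. by rewrite nmZ nm1 mulr1. Qed.

Lemma nm_sum (I : Type) (r : seq I) (P : pred I) (F : I -> A) :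
  nm (\sum_(i <- r | P i) F i) <= \sum_(i <- r | P i) nm (F i).
Proof.
elim/big_rec2: _ => [|i y1 y2 _ IH]; first by rewrite nm0.
by apply: le_trans (nmD _ _) _; rewrite lerD2l.
Qed.

Lemma nmX a n : nm (a ^+ n) <= nm a ^+ n.
Proof.
elim: n => [|n IH]; first by rewrite !expr0 nm1.
rewrite !exprS; apply: le_trans (nmM _ _) _.
by apply: ler_wpM2l => //; apply: nm_ge0.
Qed.

Lemma nm_sq a : nm (a * st a) = nm a ^+ 2.
Proof. by rewrite mulrC cs_cstar. Qed.

End Basics.

Section Reals.
Variable R : realType.

Lemma pow_small (rho e : R) : 0 <= rho -> rho < 1 -> 0 < e ->
  exists N, rho ^+ N < e.
Proof.
move=> r0 r1 e0.
set d := 1 - rho.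
have d0 : 0 < d by rewrite /d subr_gt0.
have key : forall N : nat, rho ^+ N * (1 + N%:R * d) <= 1.
  elim=> [|N IH]; first by rewrite expr0 mul0r addr0 mulr1.
  have P0 : 0 <= rho ^+ N by rewrite exprn_ge0.
  have P1 : rho ^+ N <= 1 by rewrite exprn_ile1 // ltW.
  have x0 : 0 <= N%:R :> R by rewrite ler0n.
  rewrite -natr1 exprSr.
  move: IH P0 P1 x0; set P := rho ^+ N; set x : R := N%:R => IH P0 P1 x0.
  have h1 : P * (1 + x * d) * rho <= rho by rewrite ler_piMl // ltW.
  have h2 : P * rho * d <= d by rewrite ler_piMl ?(ltW d0) // mulr_ile1 // ltW.
  rewrite /d in h1 h2 *; nra.
pose M := Num.Def.archi_bound (e * d)^-1.
exists M.
have hM : (e * d)^-1 < M%:R by apply: archi_boundP; rewrite invr_ge0 mulr_ge0 // ltW.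
have := key M; move: hM; set x : R := M%:R => hM k.
have P0 : 0 <= rho ^+ M by rewrite exprn_ge0.
move: k P0; set P := rho ^+ M => k P0.
have ed : 0 < e * d by rewrite mulr_gt0.
have h : 1 < x * (e * d) by rewrite -(ltr_pM2r ed) mulVf ?gt_eqF // in hM.
nra.
Qed.

Lemma small_eq0 (x : R) : 0 <= x -> (forall e, 0 < e -> x < e) -> x = 0.
Proof.
move=> x0 h; apply/eqP; rewrite eq_le x0 andbT; rewrite leNgt; apply/negP => xp.
by have := h x xp; rewrite ltxx.
Qed.

End Reals.

Section Neumann.
Variables (R : realType) (A : ucCstarAlg R).
Local Notation st := (@cs_star R A).
Local Notation nm := (@cs_norm R A).
Local Notation rc := (cs_real A).
Implicit Types a b x y z : A.

Definition psum z N := \sum_(0 <= k < N) z ^+ k.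

Lemma psum_tele z N : (1 - z) * psum z N = 1 - z ^+ N.
Proof.
elim: N => [|N IH]; first by rewrite /psum big_geq // mulr0 expr0 subrr.
rewrite /psum big_nat_recr //= mulrDr -/(psum z N) IH exprS.
by rewrite mulrBl mul1r addrA subrK.
Qed.

Lemma geom_seg (rho : R) q k :
  (\sum_(q <= i < q + k) rho ^+ i) * (1 - rho) = rho ^+ q - rho ^+ (q + k).
Proof.
elim: k => [|k IH]; first by rewrite addn0 big_geq // mul0r subrr.
rewrite addnS big_nat_recr ?leq_addr //= mulrDl IH exprS.
by rewrite mulrBr mulr1 addrA subrK mulrC.
Qed.

Lemma nm_psum_diff z q p : nm z < 1 -> (q <= p)%N ->
  nm (psum z p - psum z q) <= nm z ^+ q / (1 - nm z).
Proof.
move=> z1 qp.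
have -> : psum z p - psum z q = \sum_(q <= k < p) z ^+ k.
  by rewrite /psum (big_cat_nat (leq0n q) qp) /= addrAC subrr add0r.
apply: le_trans; first exact: nm_sum.
apply: le_trans (_ : \sum_(q <= k < p) nm z ^+ k <= _).
  by apply: ler_sum => i _; apply: nmX.
have d0 : 0 < 1 - nm z by rewrite subr_gt0.
rewrite ler_pdivlMr // -(subnKC qp) geom_seg.
by rewrite lerBlDr lerDl exprn_ge0 // nm_ge0.
Qed.

Lemma neumann z : nm z < 1 -> exists b, (1 - z) * b = 1.
Proof.
move=> z1.
have r0 := nm_ge0 z.
have d0 : 0 < 1 - nm z by rewrite subr_gt0.
have [l hl] : exists l, forall e : R, 0 < e -> exists N, forall p, (N <= p)%N ->
        nm (psum z p - l) < e.
  apply: cs_complete => e e0.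
  have [N hN] := pow_small r0 z1 (mulr_gt0 e0 d0).
  exists N => p q Np Nq.
  have key : forall p q, (N <= q)%N -> (q <= p)%N -> nm (psum z p - psum z q) < e.
    move=> p' q' Nq' qp'.
    apply: le_lt_trans (nm_psum_diff z1 qp') _.
    rewrite ltr_pdivrMr //; apply: le_lt_trans hN.
    by rewrite ler_wiXn2l // ltW.
  have [qp|pq] := leqP q p; first exact: key.
  by rewrite nmBC; apply: key => //; apply: ltnW.
exists l.
apply/eqP; rewrite -subr_eq0 -nm_eq0; apply/eqP.
apply: small_eq0 (nm_ge0 _) _ => e e0.
have e40 : 0 < e / 4 by rewrite divr_gt0.
have e20 : 0 < e / 2 by rewrite divr_gt0.
have [N1 hN1] := hl _ e40.
have [N2 hN2] := pow_small r0 z1 e20.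
pose p := maxn N1 N2.
have h1 := hN1 p (leq_maxl _ _).
have h2 : nm z ^+ p <= nm z ^+ N2 by rewrite ler_wiXn2l ?leq_maxr // ltW.
have -> : (1 - z) * l - 1 = (1 - z) * (l - psum z p) + ((1 - z) * psum z p - 1).
  by rewrite mulrBr addrA subrK.
rewrite psum_tele addrAC subrr add0r.
apply: le_lt_trans (nmD _ _) _.
have h3 : nm ((1 - z) * (l - psum z p)) <= 2 * (e / 4).
  apply: le_trans (nmM _ _) _.
  apply: ler_pM; rewrite ?nm_ge0 //.
    by apply: le_trans (nmB _ _) _; rewrite nm1 lerD2l ltW.
  by rewrite nmBC ltW.
have h4 : nm (- z ^+ p) <= nm z ^+ N2 by rewrite nmN; apply: le_trans (nmX _ _) h2.
have h5 := lerD h3 h4.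
apply: le_lt_trans h5 _.
have : nm z ^+ N2 < e / 2 by [].
move=> h6; lra.
Qed.

Lemma inv_big (y : A) (mu : R[i]) : nm y < Normc.normc mu ->
  exists b, (y - mu%:A) * b = 1.
Proof.
move=> h.
have mu0 : mu != 0.
  apply/eqP => m0; move: h; rewrite m0 Normc.normc0 => h.
  by have := nm_ge0 y; rewrite leNgt h.
have [b hb] : exists b, (1 - mu^-1 *: y) * b = 1.
  apply: neumann; rewrite nmZ Normc.normcV.
  have np : 0 < Normc.normc mu by apply: le_lt_trans h; apply: nm_ge0.
  by rewrite mulrC ltr_pdivrMr // mul1r.
exists (- mu^-1 *: b).
have e : y - mu%:A = (- mu) *: (1 - mu^-1 *: y).
  by rewrite scalerBr !scaleNr scalerA mulfV // scale1r opprK addrC.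
rewrite e -scalerAl -scalerAr hb scalerA mulrNN mulfV // scale1r //.
Qed.

End Neumann.

Section Spectral.
Variables (R : realType) (A : ucCstarAlg R).
Local Notation st := (@cs_star R A).
Local Notation nm := (@cs_norm R A).
Local Notation rc := (cs_real A).
Implicit Types a b x y z h : A.

Lemma normc_sq (a b : R) : Normc.normc (a +i* b)%C ^+ 2 = a ^+ 2 + b ^+ 2.
Proof. by rewrite /= sqr_sqrtr // addr_ge0 // sqr_ge0. Qed.

Lemma normc_ge0 (c : R[i]) : 0 <= Normc.normc c.
Proof. by case: c => a b /=; rewrite sqrtr_ge0. Qed.

Lemma nm_sa_sq h : st h = h -> nm (h * h) = nm h ^+ 2.
Proof. by move=> sh; rewrite -{1}sh nm_cstar. Qed.

Lemma realness h (lam : R[i]) : st h = h -> complex.Im lam != 0 ->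
  exists b, (h - lam%:A) * b = 1.
Proof.
case: lam => a b0 /= sh bn0.
set t : R := (nm h ^+ 2 + 1) / b0.
have bt : b0 * t = nm h ^+ 2 + 1 by rewrite /t mulrC divfK.
set c : R[i] := (0 +i* t)%C.
set y := h + c%:A.
have -> : h - (a +i* b0)%C%:A = y - ((a +i* b0)%C + c)%:A.
  by rewrite /y scalerDl opprD addrACA subrr addr0.
apply: inv_big.
have sy : st y = h - c%:A.
  rewrite /y stD sh st_alg; congr (_ + _).
  have -> : (c^*)%C = - c by rewrite /c; simpc.
  by rewrite scaleNr.
have yy : st y * y = h * h + rc (t ^+ 2).
  rewrite sy /y mulrDr !mulrBl [h * c%:A]mulrC addrA subrK.
  have -> : c%:A * c%:A = (c * c)%:A :> A by rewrite mulr_algl scalerA.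
  have -> : c * c = - (t ^+ 2)%:C%C by rewrite /c; simpc; rewrite expr2.
  by rewrite /cs_real scaleNr opprK.
have ny : nm y ^+ 2 <= nm h ^+ 2 + t ^+ 2.
  rewrite -nm_cstar yy; apply: le_trans (nmD _ _) _.
  by rewrite nm_rc nm_sa_sq // ger0_norm ?sqr_ge0.
have -> : ((a +i* b0)%C + c) = (a +i* (b0 + t))%C by rewrite /c; simpc.
rewrite -(@ltr_pXn2r _ 2) // ?nnegrE ?nm_ge0 ?normc_ge0 // normc_sq.
apply: le_lt_trans ny _.
have : 0 <= a ^+ 2 by rewrite sqr_ge0.
have : (b0 + t) ^+ 2 = b0 ^+ 2 + 2 * (b0 * t) + t ^+ 2 by rewrite sqrrD mulr_natl.
rewrite bt; have : 0 <= b0 ^+ 2 by rewrite sqr_ge0.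
move=> h1 -> h2; nra.
Qed.

Definition cert h (r : R) := st h = h /\ nm (rc r - h) <= r.

Lemma cert_pos h r : cert h r -> cs_pos h.
Proof.
case=> sh hr; split => // lam hlam.
case: (boolP (0 <= lam)) => // hneg; exfalso; apply: hlam.
case: (eqVneq (complex.Im lam) 0) => hi; last exact: realness.
move: hneg hi; case: lam => a b0 /= hneg hb0; rewrite hb0 in hneg *.
have a0 : a < 0.
  by move: hneg; rewrite lecE /= eqxx /= ltNge.
have r0 : 0 <= r by apply: le_trans hr; apply: nm_ge0.
have [b hb] : exists b, ((rc r - h) - ((r - a)%:C)%C%:A) * b = 1.
  apply: inv_big; rewrite normc_real ger0_norm; last by lra.
  by apply: le_lt_trans hr _; lra.
exists (- b).
have e : h - (a +i* 0)%C%:A = - ((rc r - h) - ((r - a)%:C)%C%:A).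
  have -> : (a +i* 0)%C = a%:C%C by [].
  rewrite /cs_real rmorphB /= scalerBl; ring.
by rewrite e mulNr mulrN opprK.
Qed.

Lemma cert_add h1 h2 r1 r2 : cert h1 r1 -> cert h2 r2 -> cert (h1 + h2) (r1 + r2).
Proof.
case=> s1 n1 [s2 n2]; split; first by rewrite stD s1 s2.
rewrite rcD opprD addrACA; apply: le_trans (nmD _ _) _; exact: lerD.
Qed.

Lemma cert0 : cert 0 0.
Proof. by split; rewrite ?st0 // rc0 subr0 nm0. Qed.

Lemma cert_scale w h r : 0 <= w -> cert h r -> cert (rc w * h) (w * r).
Proof.
move=> w0 [sh nh]; split; first by rewrite stM st_rc sh.
rewrite rcM -mulrBr; apply: le_trans (nmM _ _) _.
by rewrite nm_rc ger0_norm // ler_wpM2l.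
Qed.

Lemma cert_sum (I : Type) (s : seq I) (P : pred I) (F : I -> A) (r : I -> R) :
  (forall i, P i -> cert (F i) (r i)) ->
  cert (\sum_(i <- s | P i) F i) (\sum_(i <- s | P i) r i).
Proof.
move=> H; elim/big_rec2: _ => [|i y1 y2 Pi IH]; first exact: cert0.
exact: cert_add (H i Pi) IH.
Qed.

Lemma cert_upper h N : st h = h -> nm h <= N -> cert (rc N - h) N.
Proof.
move=> sh hN; split; first by rewrite stB st_rc sh.
by rewrite opprB addrC subrK.
Qed.

Lemma cert_scalar c : 0 <= c -> cert (rc c) c.
Proof. by move=> c0; split; rewrite ?st_rc // subrr nm0. Qed.

Lemma cert_norm_lb Q r t : cert Q r -> 0 <= t -> t <= nm (rc t + Q).
Proof.
case=> _ hQ t0.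
have e1 : rc (t + r) - (rc t + Q) = rc r - Q by rewrite rcD opprD addrACA subrr add0r.
have := nmD (rc (t + r) - (rc t + Q)) (rc t + Q).
rewrite subrK e1 nm_rc ger0_norm; last first.
  by apply: addr_ge0 => //; apply: le_trans hQ; apply: nm_ge0.
move=> h; lra.
Qed.

End Spectral.

Section Sqrt.
Variables (R : realType) (A : ucCstarAlg R).
Local Notation st := (@cs_star R A).
Local Notation nm := (@cs_norm R A).
Local Notation rc := (cs_real A).
Implicit Types a b x y z h : A.

Fixpoint sI (y : A) (n : nat) : A :=
  if n is n'.+1 then rc (2^-1) * (y + sI y n' * sI y n') else 0.

Lemma rc_half2 : rc 2 * rc (2^-1) = 1.
Proof. by rewrite -rcM mulfV ?rc1 // pnatr_eq0. Qed.

Lemma nm_rcM w a : nm (rc w * a) <= `|w| * nm a.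
Proof. by apply: le_trans (nmM _ _) _; rewrite nm_rc. Qed.

Lemma ci_alg_nm (t : A) : nm ('i%C%:A * t) = nm t.
Proof.
rewrite mulr_algl nmZ.
have -> : Normc.normc ('i%C : R[i]) = 1 by rewrite /= expr0n expr1n add0r sqrtr1.
by rewrite mul1r.
Qed.

Lemma sq_lemma x : st x = x -> nm x ^+ 2 <= 2^-1 -> nm (1 - x * x) <= 1.
Proof.
move=> sx hx.
set y := x * x.
have h2p : 0 < 2^-1 :> R by rewrite invr_gt0 ltr0n.
have ny : nm y <= 2^-1 by rewrite /y nm_sa_sq.
have sy : st y = y by rewrite /y stM sx.
have F1 : forall n, st (sI y n) = sI y n.
  elim=> [|n IH] /=; first exact: st0.
  by rewrite stM st_rc stD sy stM IH.
have F2 : forall n, nm (sI y n) <= 2^-1.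
  elim=> [|n IH] /=; first by rewrite nm0 invr_ge0 ler0n.
  apply: le_trans (nm_rcM _ _) _.
  rewrite ger0_norm ?(ltW h2p) //.
  have : nm (y + sI y n * sI y n) <= 2^-1 + 2^-1 * 2^-1.
    apply: le_trans (nmD _ _) _; apply: lerD => //.
    apply: le_trans (nmM _ _) _; apply: ler_pM => //; exact: nm_ge0.
  have := nm_ge0 (y + sI y n * sI y n).
  move=> h0 h1; nra.
have F3 : forall n, nm (sI y n.+1 - sI y n) <= (2^-1 : R) ^+ n.+1.
  elim=> [|k IHk].
    rewrite /= mulr0 addr0 subr0 expr1; apply: le_trans (nm_rcM _ _) _.
    rewrite ger0_norm ?(ltW h2p) //; have := nm_ge0 y => h0; nra.
  set a := sI y k.+1; set b := sI y k.
  have -> : sI y k.+2 - a = rc (2^-1) * ((a + b) * (a - b)).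
    have ea : a = rc (2^-1) * (y + b * b) by [].
    rewrite /= -/b -ea. rewrite [in X in _ - X = _]ea. ring.
  apply: le_trans (nm_rcM _ _) _; rewrite ger0_norm ?(ltW h2p) // exprS.
  apply: ler_wpM2l; first exact: ltW h2p.
  apply: le_trans (nmM _ _) _.
  have hab : nm (a + b) <= 1.
    apply: le_trans (nmD _ _) _; have := F2 k.+1; have := F2 k; rewrite -/a -/b => h1 h2; lra.
  have := nm_ge0 (a - b); have := nm_ge0 (a + b) => h1 h2; nra.
have key : forall n, nm (1 - y) <= 1 + 2 * (2^-1 : R) ^+ n.
  move=> n.
  set s := sI y n; set t := 1 - s.
  have stt : st t = t by rewrite /t stB st1 F1.
  set E := t * t - (1 - y).
  have eE : E = rc 2 * (sI y n.+1 - s).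
    have e1 : rc 2 * sI y n.+1 = y + s * s by rewrite /= mulrA rc_half2 mul1r.
    rewrite mulrBr e1 /E /t rcn; ring.
  have nE : nm E <= (2^-1 : R) ^+ n.
    rewrite eE; apply: le_trans (nm_rcM _ _) _; rewrite ger0_norm ?ler0n //.
    apply: le_trans (ler_wpM2l _ (F3 n)) _; first by rewrite ler0n.
    by rewrite exprS mulrA mulfV ?mul1r // pnatr_eq0.
  set c : R[i] := 'i%C.
  set u := x + c%:A * t.
  have cc : c%:A * c%:A = -1 :> A.
    rewrite mulr_algl scalerA.
    have -> : c * c = -1 by rewrite /c; simpc.
    by rewrite scaleN1r.
  have su : st u = x - c%:A * t.
    rewrite /u stD sx stM st_alg stt.
    have -> : (c^*)%C = - c by rewrite /c; simpc.
    by rewrite scaleNr mulNr.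
  have uu : st u * u = 1 + E.
    rewrite su /u.
    have -> : (x - c%:A * t) * (x + c%:A * t) = x * x - (c%:A * c%:A) * (t * t) by ring.
    rewrite cc /E /y; ring.
  have nu : nm u ^+ 2 <= 1 + nm E.
    by rewrite -nm_cstar uu; apply: le_trans (nmD _ _) _; rewrite nm1.
  have nt : nm t <= nm u.
    rewrite -(ci_alg_nm t) -/c.
    have -> : c%:A * t = rc (2^-1) * (u - st u).
      rewrite su /u.
      have -> : x + c%:A * t - (x - c%:A * t) = rc 2 * (c%:A * t) by rewrite rcn; ring.
      by rewrite mulrA [rc _ * rc 2]mulrC rc_half2 mul1r.
    apply: le_trans (nm_rcM _ _) _; rewrite ger0_norm ?(ltW h2p) //.
    have := nmB u (st u); rewrite nm_st => h.
    have := nm_ge0 u => h0; nra.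
  have ntt : nm (t * t) <= nm t ^+ 2 by rewrite nm_sa_sq.
  have -> : 1 - y = t * t - E by rewrite /E; ring.
  apply: le_trans (nmB _ _) _.
  have := nm_ge0 t; have := nm_ge0 u => h1 h2.
  have : nm t ^+ 2 <= nm u ^+ 2 by rewrite ler_pXn2r ?nnegrE.
  move=> h3; lra.
rewrite leNgt; apply/negP => v1.
have h1 : 2^-1 < 1 :> R by rewrite invf_lt1 // ltr1n.
have h2 : 0 < (nm (1 - y) - 1) / 2 by rewrite divr_gt0 // subr_gt0.
have [N hN] := pow_small (ltW h2p) h1 h2.
have := key N; lra.
Qed.

Lemma cert_sq x : st x = x -> cert (x * x) (2 * nm x ^+ 2).
Proof.
move=> sx.
have [x0|xn0] := eqVneq (nm x) 0.
  have -> : x = 0 by apply: cs_norm_eq0.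
  by rewrite mulr0 nm0 expr0n /= mulr0; apply: cert0.
have xp : 0 < nm x by rewrite lt_def xn0 nm_ge0.
set k := 2 * nm x ^+ 2.
have kp : 0 < k by rewrite /k mulr_gt0 // exprn_gt0.
set sg := Num.sqrt k.
have sgp : 0 < sg by rewrite /sg sqrtr_gt0.
have sg2 : sg ^+ 2 = k by rewrite /sg sqr_sqrtr // ltW.
set x' := rc sg^-1 * x.
have sx' : st x' = x' by rewrite /x' stM st_rc sx.
have nx' : nm x' ^+ 2 <= 2^-1.
  have h : nm x' <= sg^-1 * nm x.
    by apply: le_trans (nm_rcM _ _) _; rewrite ger0_norm // invr_ge0 ltW.
  have h2 : nm x' ^+ 2 <= (sg^-1 * nm x) ^+ 2 by rewrite ler_pXn2r ?nnegrE ?nm_ge0 // mulr_ge0 ?nm_ge0 // invr_ge0 ltW.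
  apply: le_trans h2 _.
  rewrite exprMn exprVn sg2 /k invfM divfK //.
  by rewrite expf_eq0 /= gt_eqF.
have hs := sq_lemma sx' nx'.
split; first by rewrite stM sx.
have -> : rc k - x * x = rc k * (1 - x' * x').
  have -> : x' * x' = rc (sg^-1 * sg^-1) * (x * x) by rewrite /x' rcM; ring.
  rewrite -invfM -[sg * sg]expr2 sg2 mulrBr mulr1 !mulrA -rcM mulfV ?gt_eqF // rc1 mul1r //.
apply: le_trans (nm_rcM _ _) _; rewrite ger0_norm; [exact: ler_piMr (ltW kp) hs | exact: ltW kp].
Qed.

Definition pc h := exists r, cert h r.

Lemma pc_add h1 h2 : pc h1 -> pc h2 -> pc (h1 + h2).
Proof. by case=> r1 c1 [r2 c2]; exists (r1 + r2); apply: cert_add. Qed.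

Lemma pc_scale w h : 0 <= w -> pc h -> pc (rc w * h).
Proof. by move=> w0 [r c]; exists (w * r); apply: cert_scale. Qed.

Lemma pc_sum (I : Type) (s : seq I) (P : pred I) (F : I -> A) :
  (forall i, P i -> pc (F i)) -> pc (\sum_(i <- s | P i) F i).
Proof.
move=> H; elim/big_rec: _ => [|i y1 Pi IH]; first by exists 0; apply: cert0.
exact: pc_add (H i Pi) IH.
Qed.

Lemma pc_scalar c : 0 <= c -> pc (rc c).
Proof. by move=> c0; exists c; apply: cert_scalar. Qed.

Lemma pc_xx x : pc (x * st x).
Proof.
set w := st x.
set u := rc (2^-1) * (x + w).
set kc : R[i] := (0 +i* (- 2^-1))%C.
set v := kc%:A * (x - w).
have su : st u = u by rewrite /u stM st_rc stD /w stK addrC.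
have sv : st v = v.
  rewrite /v stM st_alg stB /w stK.
  have -> : (kc^*)%C = - kc by rewrite /kc /=; simpc.
  by rewrite scaleNr mulNr -mulrN opprB.
have -> : x * w = u * u + v * v.
  have kk : kc%:A * kc%:A = - rc (2^-1 * 2^-1) :> A.
    rewrite mulr_algl scalerA /cs_real -scaleNr; congr (_ *: _).
    by rewrite /kc; simpc.
  have h4 : rc (2^-1 * 2^-1) * 4%:R = 1 :> A.
    rewrite -(rcn A 4) -rcM -rc1; congr rc.
    by rewrite -invfM -natrM mulVf // pnatr_eq0.
  have -> : u * u + v * v = rc (2^-1 * 2^-1) * (x + w) ^+ 2 + (kc%:A * kc%:A) * (x - w) ^+ 2.
    by rewrite /u /v rcM; ring.
  rewrite kk -[LHS]mul1r -h4; ring.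
apply: pc_add.
  by exists (2 * nm u ^+ 2); apply: cert_sq.
by exists (2 * nm v ^+ 2); apply: cert_sq.
Qed.

End Sqrt.

Section Welch.
Variables (R : realType) (A : ucCstarAlg R).
Local Notation st := (@cs_star R A).
Local Notation nm := (@cs_norm R A).
Local Notation rc := (cs_real A).

Lemma st_prod (I : Type) (s : seq I) (P : pred I) (F : I -> A) :
  st (\prod_(i <- s | P i) F i) = \prod_(i <- s | P i) st (F i).
Proof.
elim/big_rec2: _ => [|i y1 y2 _ <-]; first exact: st1.
by rewrite stM.
Qed.

Lemma ip_st d (x y : 'I_d -> A) : st (cs_ip x y) = cs_ip y x.
Proof.
rewrite /cs_ip st_sum; apply: eq_bigr => r _.
by rewrite stMr stK.
Qed.

Variable d' m : nat.
Local Notation d := d'.+1.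
Definition leo : rel 'I_d := fun a b => (a <= b)%N.
Definition key (I : {ffun 'I_m -> 'I_d}) : m.-tuple 'I_d :=
  sort_tuple leo [tuple I l | l < m].
Definition Mon (x : 'I_d -> A) (s : seq 'I_d) := \prod_(i <- s) x i.
Definition Keys := [set t : m.-tuple 'I_d | sorted leq (map val t)].
Definition wt (s : m.-tuple 'I_d) : R := #|[set I | key I == s]|%:R.

Lemma key_in I : key I \in Keys.
Proof.
rewrite inE /key /=.
have := sort_sorted (leT := leo) _ [tuple I l | l < m].
rewrite sorted_map; apply.
by move=> a b; rewrite /leo leq_total.
Qed.

Lemma mon_key (x : 'I_d -> A) (I : {ffun 'I_m -> 'I_d}) : \prod_(l < m) x (I l) = Mon x (key I).
Proof.
rewrite /Mon /key /= (perm_big _ (permEl (perm_sort _ _))) /=.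
by rewrite big_map /= big_enum.
Qed.

Lemma ip_pow (x y : 'I_d -> A) :
  cs_ip x y ^+ m = \sum_(s in Keys) rc (wt s) * (Mon x s * st (Mon y s)).
Proof.
have -> : cs_ip x y ^+ m = \prod_(l < m) cs_ip x y by rewrite prodr_const card_ord.
rewrite /cs_ip bigA_distr_bigA /=.
rewrite (partition_big key (mem Keys)) /=; last by move=> I _; apply: key_in.
apply: eq_bigr => s _.
rewrite (eq_bigr (fun _ => Mon x s * st (Mon y s))); last first.
  move=> I /eqP <-; rewrite big_split /= -st_prod.
  by rewrite !mon_key.
rewrite sumr_const /wt rcn mulr_natl cardsE.
done.
Qed.

Variables (n : nat) (tau : 'I_n -> 'I_d -> A).
Hypothesis unit : forall j, cs_ip (tau j) (tau j) = 1.

Definition Mj j s := Mon (tau j) s.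
Definition P j s t := Mj j s * st (Mj j t).
Definition H s t := \sum_(j < n) P j s t.
Definition g j k := cs_ip (tau j) (tau k) ^+ m.
Definition Stot := \sum_(j < n) \sum_(k < n) g j k * st (g j k).

Lemma gg j k : g j k * st (g j k) =
  \sum_(s in Keys) \sum_(t in Keys) rc (wt s * wt t) * (P j s t * st (P k s t)).
Proof.
rewrite /g ip_pow st_sum big_distrlr /=; apply: eq_bigr => s _.
apply: eq_bigr => t _.
rewrite stM st_rc stM stK /P /Mj stM stK rcM; ring.
Qed.

Lemma HH s t : H s t * st (H s t) = \sum_(j < n) \sum_(k < n) P j s t * st (P k s t).
Proof.
rewrite /H st_sum big_distrlr /=; done.
Qed.

Lemma Stot_eq : Stot =
  \sum_(s in Keys) \sum_(t in Keys) rc (wt s * wt t) * (H s t * st (H s t)).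
Proof.
rewrite /Stot.
under eq_bigr => j _ do under eq_bigr => k _ do rewrite gg.
under eq_bigr => j _ do rewrite exchange_big /=.
under eq_bigr => j _ do under eq_bigr => s _ do rewrite exchange_big /=.
rewrite exchange_big /=; apply: eq_bigr => s _.
rewrite exchange_big /=; apply: eq_bigr => t _.
by rewrite HH mulr_sumr; apply: eq_bigr => j _; rewrite mulr_sumr.
Qed.

Definition a s := rc (wt s) * H s s.

Lemma sa_H s : st (H s s) = H s s.
Proof. by rewrite /H st_sum; apply: eq_bigr => j _; rewrite /P stM stK mulrC. Qed.

Lemma sa_a s : st (a s) = a s.
Proof. by rewrite /a stM st_rc sa_H. Qed.

Lemma sum_a : \sum_(s in Keys) a s = n%:R.
Proof.
have -> : (n%:R : A) = \sum_(j < n) g j j.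
  rewrite /g (eq_bigr (fun _ => 1)); first by rewrite sumr_const card_ord.
  by move=> j _; rewrite unit expr1n.
symmetry; rewrite /g; under eq_bigr => j _ do rewrite ip_pow.
rewrite exchange_big /=; apply: eq_bigr => s _.
by rewrite /a /H mulr_sumr.
Qed.

Definition X := \sum_(s in Keys) a s * a s.
Definition Kc : R := #|Keys|%:R.

Lemma Stot_split : Stot =
  \sum_(s in Keys) \sum_(t in Keys | t != s) rc (wt s * wt t) * (H s t * st (H s t)) + X.
Proof.
rewrite Stot_eq /X -big_split /=; apply: eq_bigr => s sK.
rewrite (bigD1 s) //= addrC; congr (_ + _).
by rewrite sa_H /a rcM; ring.
Qed.

Lemma lagrange : \sum_(s in Keys) \sum_(t in Keys) (a s - a t) * (a s - a t) =
   (X *+ #|Keys|) *+ 2 - (n%:R * n%:R) *+ 2.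
Proof.
have e : forall s t, (a s - a t) * (a s - a t) =
    a s * a s + a t * a t - (a s * a t) *+ 2 by move=> s t; ring.
under eq_bigr => s _ do under eq_bigr => t _ do rewrite e.
under eq_bigr => s _ do rewrite sumrB big_split.
rewrite sumrB big_split.
have e1 : \sum_(s in Keys) \sum_(t in Keys) a s * a s = X *+ #|Keys|.
  by rewrite /X -sumrMnl; apply: eq_bigr => s _; rewrite sumr_const.
have e2 : \sum_(s in Keys) \sum_(t in Keys) a t * a t = X *+ #|Keys|.
  by rewrite sumr_const.
have e3 : \sum_(s in Keys) \sum_(t in Keys) (a s * a t) *+ 2 = (n%:R * n%:R) *+ 2.
  rewrite -sum_a big_distrlr /= -sumrMnl; apply: eq_bigr => s _.
  by rewrite -sumrMnl.
by rewrite e1 e2 e3 mulr2n.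
Qed.

Lemma Keys_gt0 : (0 < #|Keys|)%N.
Proof. by apply/card_gt0P; exists (key [ffun => ord0]); apply: key_in. Qed.

Lemma welch_pc : pc (Stot - rc (n%:R ^+ 2 / #|Keys|%:R)).
Proof.
set K := #|Keys|.
have K0 : (0 < K%:R :> R) by rewrite ltr0n Keys_gt0.
rewrite Stot_split -addrA; apply: pc_add.
  apply: pc_sum => s _; apply: pc_sum => t _; apply: pc_scale.
    by rewrite mulr_ge0 // ler0n.
  exact: pc_xx.
have -> : X - rc (n%:R ^+ 2 / K%:R) = rc ((K%:R * 2)^-1) *
    \sum_(s in Keys) \sum_(t in Keys) (a s - a t) * (a s - a t).
  have e1 : X *+ K *+ 2 = rc (K%:R * 2) * X.
    by rewrite -natrM rcn mulr_natl mulrnA.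
  have e2 : (n%:R * n%:R) *+ 2 = rc (2 * n%:R ^+ 2) :> A.
    by rewrite -mulr_natl -(rcn A 2) -(rcn A n) -!rcM expr2.
  rewrite lagrange e1 e2 mulrBr mulrA -!rcM.
  have -> : (K%:R * 2)^-1 * (K%:R * 2) = 1 :> R by rewrite mulVf // mulf_neq0 // gt_eqF.
  rewrite rc1 mul1r; congr (_ - rc _).
  have K0' : K%:R != 0 :> R by rewrite gt_eqF.
  by rewrite invfM; field.
apply: pc_scale; first by rewrite invr_ge0 mulr_ge0 // ltW.
apply: pc_sum => s _; apply: pc_sum => t _.
have -> : (a s - a t) * (a s - a t) = (a s - a t) * st (a s - a t) by rewrite stB !sa_a.
exact: pc_xx.
Qed.

End Welch.

Section Main.
Variables (R : realType) (A : ucCstarAlg R).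
Local Notation st := (@cs_star R A).
Local Notation nm := (@cs_norm R A).
Local Notation rc := (cs_real A).

Variables (d' m n : nat) (tau : 'I_n -> 'I_d'.+1 -> A).
Local Notation ip j k := (cs_ip (tau j) (tau k)).

Lemma S_eq : \sum_(j < n) \sum_(k < n) ip j k ^+ m * ip k j ^+ m = Stot m tau.
Proof.
rewrite /Stot /g; apply: eq_bigr => j _; apply: eq_bigr => k _.
by rewrite stX ip_st.
Qed.

Lemma sa_Stot : st (Stot m tau) = Stot m tau.
Proof.
rewrite /Stot st_sum; apply: eq_bigr => j _; rewrite st_sum; apply: eq_bigr => k _.
by rewrite stM stK mulrC.
Qed.

Lemma nm_gst j k : nm (g m tau j k * st (g m tau j k)) <= nm (ip j k) ^+ (2 * m).
Proof.
rewrite nm_sq mulnC exprM ler_pXn2r ?nnegrE ?nm_ge0 ?exprn_ge0 ?nm_ge0 //.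
exact: nmX.
Qed.

Lemma part1 : cs_le (\sum_(j < n) \sum_(k < n) ip j k ^+ m * ip k j ^+ m)
  (rc (\sum_(j < n) \sum_(k < n) nm (ip j k) ^+ (2 * m))).
Proof.
rewrite S_eq /cs_le; apply: (@cert_pos _ _ _ (\sum_(j < n) \sum_(k < n) nm (ip j k) ^+ (2 * m))).
apply: cert_upper; first exact: sa_Stot.
rewrite /Stot; apply: le_trans; first exact: nm_sum.
apply: ler_sum => j _; apply: le_trans; first exact: nm_sum.
by apply: ler_sum => k _; apply: nm_gst.
Qed.

Hypothesis unit : forall j, cs_ip (tau j) (tau j) = 1.

Lemma card_K : #|Keys d' m| = 'C(d'.+1 + m - 1, m).
Proof. by rewrite /Keys card_sorted_tuples addSn subn1 /= addnC. Qed.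

Lemma part2 : cs_le (rc (n%:R ^+ 2 / ('C(d'.+1 + m - 1, m))%:R))
  (\sum_(j < n) \sum_(k < n) ip j k ^+ m * ip k j ^+ m).
Proof.
rewrite S_eq /cs_le -card_K.
have [r hr] := @welch_pc _ _ d' m n tau unit; exact: cert_pos hr.
Qed.

Lemma part3 : (2 <= n)%N ->
  (n%:R - 1)^-1 * (n%:R / ('C(d'.+1 + m - 1, m))%:R - 1) <=
  \big[Num.max/0]_(j < n) \big[Num.max/0]_(k < n | j != k) nm (ip j k) ^+ (2 * m).
Proof.
move=> n2.
set F := fun j k => nm (ip j k) ^+ (2 * m).
set Mx := \big[Num.max/0]_(j < n) \big[Num.max/0]_(k < n | j != k) nm (ip j k) ^+ (2 * m).
have leMx : forall j k, j != k -> F j k <= Mx.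
  move=> j k jk; rewrite /Mx (bigD1 j) //= le_max; apply/orP; left.
  by rewrite (bigD1 k) //= le_max lexx.
set C : R := ('C(d'.+1 + m - 1, m))%:R.
set N : R := n%:R.
set T := \sum_(j < n) \sum_(k < n | j != k) g m tau j k * st (g m tau j k).
have hT : Stot m tau = n%:R + T.
  rewrite /Stot /T -[n in n%:R]card_ord -sumr_const -big_split /=.
  apply: eq_bigr => j _; rewrite (bigD1 j) //= /g unit expr1n st1 mulr1; congr (_ + _).
  by apply: eq_bigl => k; rewrite eq_sym.
have [r hr] := @welch_pc _ _ d' m n tau unit.
rewrite card_K -/C in hr.
have eT : T = rc (N ^+ 2 / C - N) + (Stot m tau - rc (N ^+ 2 / C)).
  by rewrite hT rcB /N rcn; ring.
have nT : nm T <= \sum_(j < n) \sum_(k < n | j != k) F j k.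
  apply: le_trans; first exact: nm_sum.
  apply: ler_sum => j _; apply: le_trans; first exact: nm_sum.
  by apply: ler_sum => k _; apply: nm_gst.
have S0 : 0 <= \sum_(j < n) \sum_(k < n | j != k) F j k.
  by apply: sumr_ge0 => j _; apply: sumr_ge0 => k _; rewrite exprn_ge0 ?nm_ge0.
have h1 : N ^+ 2 / C - N <= \sum_(j < n) \sum_(k < n | j != k) F j k.
  case: (lerP 0 (N ^+ 2 / C - N)) => hc; last by lra.
  by apply: le_trans nT; rewrite eT; apply: cert_norm_lb hr hc.
have h2 : \sum_(j < n) \sum_(k < n | j != k) F j k <= N * ((N - 1) * Mx).
  apply: le_trans (_ : \sum_(j < n) ((N - 1) * Mx) <= _); last first.
    by rewrite sumr_const card_ord mulr_natl.
  apply: ler_sum => j _.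
  apply: le_trans (_ : \sum_(k < n | j != k) Mx <= _).
    by apply: ler_sum => k jk; apply: leMx.
  have e : \sum_(k < n) Mx = Mx + \sum_(k < n | k != j) Mx by rewrite (bigD1 j).
  rewrite sumr_const card_ord in e.
  have -> : \sum_(k < n | j != k) Mx = \sum_(k < n | k != j) Mx.
    by apply: eq_bigl => k; rewrite eq_sym.
  have -> : \sum_(k < n | k != j) Mx = Mx *+ n - Mx by rewrite e addrC addKr.
  by rewrite -mulr_natl -/N mulrBl mul1r.
have N2 : 2 <= N by rewrite /N ler_nat.
have N0 : 0 < N by lra.
have hN1 : 0 < N - 1 by lra.
have hz : (N - 1)^-1 * (N - 1) = 1 by rewrite mulVf // gt_eqF.
have z0 : 0 < (N - 1)^-1 by rewrite invr_gt0.
have h3 : N * (N / C - 1) <= N * ((N - 1) * Mx).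
  apply: le_trans h2; apply: le_trans h1; rewrite mulrBr mulr1 mulrA expr2.
  done.
rewrite ler_pM2l // in h3.
apply: le_trans (ler_wpM2l (ltW z0) h3) _.
by rewrite mulrA hz mul1r.
Qed.

End Main.


Unset Implicit Arguments.

Theorem theorem2p2 (R : realType) (A : ucCstarAlg R) (d n : nat)
    (tau : 'I_n -> 'I_d -> A) :
  (d <= n)%N ->
  (forall j : 'I_n, cs_ip (tau j) (tau j) = 1) ->
  (forall m : nat, (0 < m)%N ->
     cs_le (\sum_(j < n) \sum_(k < n)
              cs_ip (tau j) (tau k) ^+ m * cs_ip (tau k) (tau j) ^+ m)
           (cs_real A (\sum_(j < n) \sum_(k < n)
              cs_norm (cs_ip (tau j) (tau k)) ^+ (2 * m)))
     /\
     cs_le (cs_real A (n%:R ^+ 2 / ('C(d + m - 1, m))%:R))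
           (\sum_(j < n) \sum_(k < n)
              cs_ip (tau j) (tau k) ^+ m * cs_ip (tau k) (tau j) ^+ m))
  /\
  (cs_le (\sum_(j < n) \sum_(k < n)
            cs_ip (tau j) (tau k) * cs_ip (tau k) (tau j))
         (cs_real A (\sum_(j < n) \sum_(k < n)
            cs_norm (cs_ip (tau j) (tau k)) ^+ 2))
   /\
   cs_le (cs_real A (n%:R ^+ 2 / d%:R))
         (\sum_(j < n) \sum_(k < n)
            cs_ip (tau j) (tau k) * cs_ip (tau k) (tau j)))
  /\
  ((2 <= n)%N ->
   (forall m : nat, (0 < m)%N ->
      \big[Num.max/0]_(j < n) \big[Num.max/0]_(k < n | j != k)
         cs_norm (cs_ip (tau j) (tau k)) ^+ (2 * m)
      >= (n%:R - 1)^-1 * (n%:R / ('C(d + m - 1, m))%:R - 1))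
   /\
   \big[Num.max/0]_(j < n) \big[Num.max/0]_(k < n | j != k)
      cs_norm (cs_ip (tau j) (tau k)) ^+ 2
   >= (n%:R - d%:R) / (d%:R * (n%:R - 1))).
Proof.
move=> hdn hunit.
case: d tau hdn hunit => [|d'] tau hdn hunit.
  case: n tau hdn hunit => [|n'] tau _ hunit; last first.
    have := hunit ord0; rewrite /cs_ip big_ord0 => /esym/eqP.
    by rewrite oner_eq0.
  have c0 : cs_le (0 : A) (cs_real A 0).
    by apply: (@cert_pos _ _ _ 0); rewrite subr0; apply: cert_scalar.
  have c1 : forall x : R, cs_le (cs_real A (0%:R ^+ 2 / x)) 0.
    move=> x; rewrite expr0n /= mul0r.
    by apply: (@cert_pos _ _ _ 0); rewrite rc0 subr0; apply: cert0.
  split; first by move=> m _; rewrite !big_ord0; split; [exact: c0 | exact: c1].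
  by split; [rewrite !big_ord0; split; [exact: c0 | exact: c1] | ].
split; first by move=> m _; split; [exact: part1 | exact: part2].
split.
  split; first exact: (@part1 _ _ d' 1 n tau).
  by have := @part2 _ _ d' 1 n tau hunit; rewrite addnK bin1.
move=> n2; split; first by move=> m _; exact: part3.
have := @part3 _ _ d' 1 n tau hunit n2; rewrite addnK bin1 muln1.
apply: le_trans; rewrite le_eqVlt; apply/orP; left; apply/eqP.
have hd : (d'.+1%:R : R) != 0 by rewrite pnatr_eq0.
have hn : (n%:R - 1 : R) != 0.
  rewrite subr_eq0 pnatr_eq1; apply/eqP => h; move: n2; rewrite h.
  done.
by field; rewrite hn andbT addrC natr1 pnatr_eq0.
Qed.
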